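(* Let $G$ be a bipartite graph with $n$ vertices and $m$ edges, and let $\eta$ be the nullity of $G$. Then $$S_{k}(A(G))\leq \begin{cases} \sqrt{km}, & \text{if } 1\leq k \leq \left\lfloor\frac{n-\eta}{2}\right\rfloor;\\ \sqrt{\left\lfloor\frac{n-\eta}{2}\right\rfloor m}, & \text{if } \left\lfloor\frac{n-\eta}{2}\right\rfloor< k \leq \left\lfloor\frac{n+\eta}{2}\right\rfloor;\\ \sqrt{(n-k)m}, & \text{if } \left\lfloor\frac{n+\eta}{2}\right\rfloor< k \leq n. \end{cases}$$
   Context: All graphs are simple and undirected. $A(G)$ is the adjacency matrix. The nullity of $G$ is the multiplicity of the eigenvalue $0$ of $A(G)$. For a real symmetric matrix $M$ with eigenvalues $\lambda_1(M)\geq\cdots\geq\lambda_n(M)$, $S_k(M)=\sum_{i=1}^k\lambda_i(M)$. *)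

(* Defs.v *)
From HB Require Import structures.
From mathcomp Require Import all_boot all_order all_algebra.
From mathcomp Require Import reals.
Set Implicit Arguments. Unset Strict Implicit. Unset Printing Implicit Defensive.
Import Order.TTheory GRing.Theory Num.Theory.
Local Open Scope ring_scope.

Definition simple_graph (n : nat) (e : rel 'I_n) : Prop :=
  (forall i, ~~ e i i) /\ (forall i j, e i j = e j i).

Definition bipartite (n : nat) (e : rel 'I_n) : Prop :=
  exists f : 'I_n -> bool, forall i j, e i j -> f i != f j.

Definition num_edges (n : nat) (e : rel 'I_n) : nat :=
  #|[set p : 'I_n * 'I_n | e p.1 p.2 && (p.1 < p.2)%N]|.

Definition adj_mx (R : nzRingType) (n : nat) (e : rel 'I_n) : 'M[R]_n :=
  \matrix_(i, j) (e i j)%:R.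

(* s is the list of eigenvalues of M (with algebraic multiplicity), sorted
   non-increasingly: lambda_1 >= ... >= lambda_n. *)
Definition sorted_spectrum (R : realType) (n : nat) (M : 'M[R]_n) (s : seq R) : Prop :=
  char_poly M = \prod_(x <- s) ('X - x%:P) /\ sorted (fun x y => y <= x) s.

Definition Sk (R : realType) (s : seq R) (k : nat) : R := \sum_(i < k) s`_i.

Definition nullity_of (R : realType) (s : seq R) : nat := count_mem 0 s.

Definition bound41 (R : realType) (n m eta k : nat) : R :=
  if (k <= (n - eta)./2)%N then Num.sqrt ((k * m)%:R)
  else if (k <= (n + eta)./2)%N then Num.sqrt ((((n - eta)./2) * m)%:R)
  else Num.sqrt (((n - k) * m)%:R).

(* Main.v *)
Require Import Defs.
From HB Require Import structures.
From mathcomp Require Import all_boot all_order all_algebra.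
From mathcomp Require Import reals.
From mathcomp Require Import ring lra zify.
Import Order.TTheory GRing.Theory Num.Theory.
Local Open Scope ring_scope.

Section SeqPart.
Variable R : realType.
Implicit Types (t s : seq R).

Lemma CS t : (\sum_(x <- t) x) ^+ 2 <= (size t)%:R * \sum_(x <- t) x ^+ 2.
Proof.
elim: t => [|a t IH]; first by rewrite !big_nil expr0n mulr0.
case: t IH => [|b t] IH.
  by rewrite !big_cons !big_nil !addr0 mul1r.
set S := \sum_(x <- b :: t) x in IH *; set Q := \sum_(x <- b :: t) x ^+ 2 in IH *.
rewrite [X in X ^+ 2 <= _]big_cons [X in _ <= _ * X]big_cons -/S -/Q.
have Q0 : 0 <= Q by rewrite /Q; apply: sumr_ge0 => x _; apply: sqr_ge0.
set k : R := (size (b :: t))%:R in IH *.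
have k0 : 0 < k by rewrite /k ltr0n.
have H : 0 <= k * a ^+ 2 + Q - 2 * a * S.
  rewrite -(pmulr_rge0 _ k0).
  have -> : k * (k * a ^+ 2 + Q - 2 * a * S) = (k * a - S) ^+ 2 + (k * Q - S ^+ 2) by ring.
  by apply: addr_ge0; [apply: sqr_ge0 | rewrite subr_ge0].
rewrite -subr_ge0 /= -natr1 -/k.

have -> : (k + 1) * (a ^+ 2 + Q) - (a + S) ^+ 2 = (k * a ^+ 2 + Q - 2 * a * S) + (k * Q - S ^+ 2) by ring.
by apply: addr_ge0 => //; rewrite subr_ge0.

Qed.

Lemma sqrt_step (S U c : R) : S <= U -> 0 <= U -> U ^+ 2 <= c -> S <= Num.sqrt c.
Proof.
move=> SU U0 Uc; apply: (le_trans SU).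
rewrite -(ger0_norm U0) -sqrtr_sqr; exact: ler_wsqrtr.
Qed.

End SeqPart.

Section S2.
Variable R : realType.
Implicit Types (t s : seq R).

Lemma Sk_take s k : (k <= size s)%N -> Sk s k = \sum_(x <- take k s) x.
Proof.
move=> ks; rewrite /Sk (big_nth 0) size_takel // big_mkord.
by apply: eq_bigr => i _; rewrite nth_take.
Qed.

Lemma sum_sym s : perm_eq s (map -%R s) -> \sum_(x <- s) x = 0.
Proof.
move=> P; have : \sum_(x <- s) x = \sum_(x <- map -%R s) x by apply: perm_big.
rewrite big_map sumrN => /eqP; rewrite -subr_eq0 opprK => /eqP.
by rewrite -mulr2n -mulr_natr => /eqP; rewrite mulf_eq0 pnatr_eq0 orbF => /eqP.
Qed.

Lemma sq_sym s : perm_eq s (map -%R s) ->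
  \sum_(x <- s | 0 < x) x ^+ 2 = \sum_(x <- s | x < 0) x ^+ 2.
Proof.
move=> P; rewrite (perm_big _ P) big_map.
by apply: eq_big => x; rewrite ?oppr_gt0 // sqrrN.
Qed.

Lemma sq_split s : \sum_(x <- s) x ^+ 2 =
  \sum_(x <- s | 0 < x) x ^+ 2 + \sum_(x <- s | x < 0) x ^+ 2.
Proof.
rewrite (bigID (fun x => 0 < x)) /=; congr (_ + _).
rewrite (bigID (fun x => x < 0)) /= [X in _ + X]big1 ?addr0.
  by apply: eq_bigl => x; case: ltgtP.
by move=> x; case: ltgtP => // <- _; rewrite expr0n.
Qed.

Lemma count_split s : size s = addn (addn (count (fun x => 0 < x) s) (count (fun x => x < 0) s)) (count_mem (0:R) s).
Proof.
elim: s => //= x s ->; case: (ltgtP x 0) => [h|h|<-]; rewrite ?eqxx ?(gt_eqF h) ?(lt_eqF h) /=; lia.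
Qed.

Lemma count_sym s : perm_eq s (map -%R s) ->
  count (fun x => 0 < x) s = count (fun x => x < 0) s.
Proof.
move=> /permP P; rewrite P count_map; apply: eq_count => x /=; by rewrite oppr_gt0.
Qed.

Lemma sum_pos_le s (P : pred R) t : \sum_(x <- s | P x) x ^+ 2 <= \sum_(x <- s ++ t | P x) x ^+ 2.
Proof.
rewrite big_cat /= lerDl; apply: sumr_ge0 => x _; exact: sqr_ge0.
Qed.


Lemma seq_main s (n m k : nat) : size s = n -> perm_eq s (map -%R s) ->
  \sum_(x <- s) x ^+ 2 = (2 * m)%:R -> (1 <= k <= n)%N ->
  Sk s k <= bound41 R n m (nullity_of s) k.
Proof.
move=> sz P sq /andP[k1 kn].
have Qp : \sum_(x <- s | 0 < x) x ^+ 2 = m%:R.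
  move: sq; rewrite sq_split -(sq_sym _ P) -mulr2n natrM mulr_natl => /eqP.
  by rewrite -subr_eq0 -mulrnBl mulrn_eq0 /= subr_eq0 => /eqP.
have Qn : \sum_(x <- s | x < 0) x ^+ 2 = m%:R by rewrite -(sq_sym _ P).
have m0 : 0 <= m%:R :> R by [].
have B1 : forall j : nat, (count (fun x : R => (0 < x)%R) (take k s) <= j)%N -> Sk s k <= Num.sqrt ((j * m)%:R).
  move=> j hj; rewrite Sk_take ?sz //.
  set u := [seq x <- take k s | 0 < x].
  apply: (@sqrt_step _ _ (\sum_(x <- u) x)).
  - rewrite big_filter (bigID (fun x => 0 < x)) /= gerDl.
    by apply: sumr_le0 => x; rewrite leNgt.
  - by rewrite big_filter; apply: sumr_ge0 => x /ltW.
  - apply: (le_trans (CS _ u)); rewrite natrM; apply: ler_pM => //.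
    + by apply: sumr_ge0 => x _; apply: sqr_ge0.
    + by rewrite ler_nat /u size_filter.
    + rewrite /u big_filter -Qp.
      by rewrite -[X in _ <= \sum_(x <- X | _) _](cat_take_drop k s) sum_pos_le.
have B3 : Sk s k <= Num.sqrt (((n - k) * m)%:R).
  rewrite Sk_take ?sz //.
  have -> : \sum_(x <- take k s) x = - \sum_(x <- drop k s) x.
    apply/eqP; rewrite -subr_eq0 opprK -big_cat cat_take_drop.
    by rewrite (sum_sym _ P).
  set w := map -%R [seq x <- drop k s | x < 0].
  apply: (@sqrt_step _ _ (\sum_(x <- w) x)).
  - rewrite /w big_map big_filter -sumrN (bigID (fun x => x < 0)) /= gerDl.
    by apply: sumr_le0 => x; rewrite oppr_le0 leNgt.
  - rewrite /w big_map big_filter; apply: sumr_ge0 => x; by rewrite oppr_ge0 => /ltW.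
  - apply: (le_trans (CS _ w)); rewrite natrM; apply: ler_pM => //.
    + by apply: sumr_ge0 => x _; apply: sqr_ge0.
    + rewrite ler_nat /w size_map size_filter -sz -size_drop; exact: count_size.
    + rewrite /w big_map big_filter -Qn.
      under eq_bigr do rewrite sqrrN.
      rewrite -[X in _ <= \sum_(x <- X | _) _](cat_take_drop k s) big_cat /= lerDr.
      by apply: sumr_ge0 => x _; apply: sqr_ge0.
set p := count (fun x => 0 < x) s.
have hn : n = (p + p + nullity_of s)%N.
  by rewrite -sz count_split -(count_sym _ P).
have E1 : ((n - nullity_of s)./2 = p)%N.
  by rewrite hn addnK addnn; apply: doubleK.
have E2 : ((n + nullity_of s)./2 = p + nullity_of s)%N.
  rewrite hn; have -> : (p + p + nullity_of s + nullity_of s = (p + nullity_of s).*2)%N.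
    by rewrite -addnn; lia.
  exact: doubleK.
rewrite /bound41 E1 E2.
case: ifP => h1.
  apply: B1; apply: (leq_trans (count_size _ _)); rewrite size_take; case: ifP => //.
  by move=> /negbT; rewrite -leqNgt.
case: ifP => h2 //.
apply: B1; rewrite /p -[X in (_ <= count _ X)%N](cat_take_drop k s) count_cat; exact: leq_addr.
Qed.

End S2.

Section Mx.
Variable R : realType.
Variable n : nat.
Variable e : rel 'I_n.
Hypothesis He : simple_graph e.

Local Notation A := (adj_mx R e).
Local Notation PA := (map_mx (@polyC R) A).

Lemma L1 : bipartite e -> \det ('X%:M + PA) = char_poly A.
Proof.
case=> f hf; case: He => irr sym.
pose d := \row_(i < n) (if f i then 1 else -1 : {poly R}).
have dd : forall i, d 0 i * d 0 i = 1.
  by move=> i; rewrite mxE; case: (f i); rewrite ?mulr1 ?mulrNN ?mulr1.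
have DD : diag_mx d *m diag_mx d = 1%:M.
  apply/matrixP => i j; rewrite mulmx_diag !mxE.
  by case: (i == j); case: (f i); rewrite /= ?mulr1 ?mulrNN ?mulr1.
idtac.
have E : diag_mx d *m char_poly_mx A *m diag_mx d = 'X%:M + PA.
  rewrite mul_diag_mx mul_mx_diag; apply/matrixP => i j; rewrite !mxE.
  case: (eqVneq i j) => [<-|ij].
    by rewrite (negbTE (irr i)) /= ?polyC0 ?subr0 ?addr0; case: (f i); rewrite ?mulr1 ?mul1r ?mulrN ?mulNr ?mulr1 ?opprK ?mul1r.
  rewrite /= !mulr0n sub0r add0r.
  case eij: (e i j); last by rewrite /= polyC0 oppr0 mulr0 mul0r.
  have := hf i j eij.
  by case: (f i); case: (f j) => //= _; rewrite ?mulN1r ?mulrN1 ?mul1r ?mulr1 ?opprK ?mulrN ?mulNr.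
rewrite -E !det_mulmx mulrC mulrA -det_mulmx DD det1 mul1r.
by rewrite /char_poly.
Qed.


Lemma prodN_seq (T : Type) (s : seq T) (F : T -> {poly R}) :
  \prod_(x <- s) - F x = (-1) ^+ size s * \prod_(x <- s) F x.
Proof.
elim: s => [|a s IH]; first by rewrite !big_nil mul1r.
by rewrite !big_cons IH /= exprS -mulN1r; ring.
Qed.

Lemma L2 (s : seq R) : char_poly A = \prod_(x <- s) ('X - x%:P) -> size s = n ->
  \prod_(x <- s) ('X + x%:P) = \det ('X%:M + PA).
Proof.
move=> cp sz.
have h1 : (char_poly A) \Po (-'X) = (-1) ^+ n * \det ('X%:M + PA).
  rewrite /char_poly -det_map_mx.
  have -> : map_mx (comp_poly (-'X)) (char_poly_mx A) = (-1) *: ('X%:M + PA).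
    apply/matrixP => i j; rewrite !mxE.
    by case: (i == j); rewrite /= ?mulr1n ?mulr0n comp_polyB comp_polyC ?comp_polyX ?comp_poly0; ring.
  by rewrite detZ.
have h2 : (char_poly A) \Po (-'X) = (-1) ^+ n * \prod_(x <- s) ('X + x%:P).
  rewrite cp rmorph_prod -sz -prodN_seq; apply: eq_bigr => x _.
  by rewrite /= comp_polyB comp_polyX comp_polyC opprD.
by apply: (can_inj (signrMK n)); rewrite /= -h2 h1.
Qed.

Lemma L3 (s : seq R) : simple_graph e -> bipartite e ->
  char_poly A = \prod_(x <- s) ('X - x%:P) -> size s = n ->
  char_poly (A *m A) = \prod_(x <- s) ('X - (x ^+ 2)%:P).
Proof.
move=> sg bp cp sz.
have M : map_mx (comp_poly 'X^2) (char_poly_mx (A *m A)) = char_poly_mx A *m ('X%:M + PA).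
  rewrite /char_poly_mx mulmxBl !mulmxDr -(scalar_mxC 'X PA) opprD addrA addrK.
  rewrite -map_mxM mul_scalar_mx scale_scalar_mx.
  apply/matrixP => i j; rewrite !mxE.
  by case: (i == j); rewrite /= ?mulr1n ?mulr0n comp_polyB comp_polyC ?comp_polyX ?comp_poly0 ?comp_Xn_poly.
have h : (char_poly (A *m A)) \Po 'X^2 = (\prod_(x <- s) ('X - (x ^+ 2)%:P)) \Po 'X^2.
  rewrite /char_poly -det_map_mx M det_mulmx -/(char_poly A) -(L2 _ cp sz) cp -big_split.
  rewrite rmorph_prod; apply: eq_bigr => x _.
  rewrite /= comp_polyB comp_polyC comp_polyX rmorphXn; ring.
apply/eqP; rewrite -subr_eq0 -(@comp_poly_eq0 _ _ 'X^2) ?size_polyXn //.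
by rewrite comp_polyB h subrr.
Qed.

Lemma L4 : simple_graph e -> \tr (A *m A) = (2 * num_edges e)%:R.
Proof.
case=> irr sym.
have -> : \tr (A *m A) = (\sum_i \sum_j (e i j : nat))%:R.
  rewrite /mxtrace natr_sum; apply: eq_bigr => i _; rewrite mxE natr_sum.
  apply: eq_bigr => j _; rewrite !mxE (sym j i); by case: (e i j); rewrite ?mulr1 ?mulr0.
congr (_%:R).
have NE : num_edges e = \sum_i \sum_j ((e i j) && (i < j)%N : nat).
  rewrite /num_edges -sum1_card big_mkcond /= pair_big; apply: eq_bigr => p _.
  by rewrite inE; case: (_ && _).
have NE2 : num_edges e = \sum_i \sum_j ((e i j) && (j < i)%N : nat).
  by rewrite NE exchange_big; apply: eq_bigr => i _; apply: eq_bigr => j _; rewrite sym.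
rewrite mul2n -addnn {1}NE NE2 -big_split; apply: eq_bigr => i _.
rewrite -big_split; apply: eq_bigr => j _ /=.
case: (ltngtP i j) => [h|h|h]; rewrite ?andbT ?andbF ?addn0 //.
have -> : i = j by apply: val_inj.
by rewrite (negbTE (irr j)).
Qed.

End Mx.

Theorem theorem4p1 (R : realType) (n : nat) (e : rel 'I_n) (s : seq R) (k : nat) :
  simple_graph e -> bipartite e ->
  sorted_spectrum (adj_mx R e) s ->
  (1 <= k <= n)%N ->
  Sk s k <= bound41 R n (num_edges e) (nullity_of s) k.
Proof.
move=> sg bp [cp _] hk.
have sz : size s = n.
  have := size_char_poly (adj_mx R e); rewrite cp size_prod_XsubC; by case.
have P : perm_eq s (map -%R s).
  rewrite perm_sym; apply: prod_XsubC_eq; rewrite big_map -cp -(@L1 _ _ _ sg bp) -(@L2 _ _ _ _ cp sz).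
  by apply: eq_bigr => x _; rewrite polyCN opprK.
have n0 : (0 < n)%N by case/andP: hk => h1 h2; apply: leq_trans h2.
have SQ : \sum_(x <- s) x ^+ 2 = (2 * num_edges e)%:R.
  rewrite -(@L4 _ _ _ sg); apply: oppr_inj; rewrite -char_poly_trace // (@L3 _ _ _ _ sg bp cp sz).
  rewrite -(big_map (fun x => x ^+ 2) xpredT (fun y => 'X - y%:P)).
  rewrite -sz -(size_map (fun x => x ^+ 2)) coefPn_prod_XsubC ?size_map ?sz -?lt0n //.
  by rewrite big_map.
exact: seq_main sz P SQ hk.
Qed.
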